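(* Let $d>k\geq1$ be integers, let $\beta>0$ and $\lambda_k>2\sqrt{\beta}$, and let $A:=\mathrm{diag}(\lambda_k,\dots,\lambda_k,2\sqrt\beta,\dots,2\sqrt\beta)\in\mathbb{R}^{d\times d}$, with $\lambda_k$ repeated $k$ times and $2\sqrt\beta$ repeated $d-k$ times. Let $U_k\in\mathbb{R}^{d\times k}$ be the matrix of the first $k$ standard basis vectors and $U_{-k}\in\mathbb{R}^{d\times(d-k)}$ that of the last $d-k$ standard basis vectors. Let $\varepsilon\in(0,1)$. Then there exist $X_0\in\mathrm{St}(d,k)$ with $\cos\theta_k(U_k,X_0)>0$ and perturbations $(\Xi_t)_{t\geq0}\subset\mathbb{R}^{d\times k}$ satisfying, for all $t\geq0$, $U_{-k}^\top\Xi_t=0$ and $\|U_k^\top\Xi_t\|_2\leq(\lambda_k-2\sqrt\beta)\cos\theta_k(U_k,X_t)$, such that the ANPM iterates $(X_t)_{t\geq0}$ on $A$ with momentum $\beta$ and these perturbations satisfy $\tan\theta_k(U_k,X_t)>\varepsilon$ for all $t\geq0$.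
   Context: $\mathrm{St}(d,k):=\{X\in\mathbb{R}^{d\times k}:X^\top X=I_k\}$. For $Y\in\mathbb{R}^{d\times k}$, $\mathrm{QR}(Y)$ is the pair $(X,R)$ with $Y=XR$, $X\in\mathrm{St}(d,k)$, $R$ upper triangular $k\times k$ with nonnegative diagonal (unique, $R$ invertible, when $Y$ has full column rank). For $U,X\in\mathrm{St}(d,k)$, $\theta_k(U,X):=\arccos\sigma_{\min}(U^\top X)\in[0,\pi/2]$. ANPM with momentum $\beta$ and perturbations $(\Xi_t)$ (which may depend on the iterates): given $X_0\in\mathrm{St}(d,k)$, $(X_1,R_1)=\mathrm{QR}(\tfrac12 AX_0+\Xi_0)$, and for $t\geq1$, $Y_{t+1}=AX_t-\beta X_{t-1}R_t^{-1}+\Xi_t$, $(X_{t+1},R_{t+1})=\mathrm{QR}(Y_{t+1})$. *)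

(* Defs.v *)
From HB Require Import structures.
From mathcomp Require Import all_boot all_order all_algebra.
From mathcomp Require Import classical_sets reals trigo.
Set Implicit Arguments. Unset Strict Implicit. Unset Printing Implicit Defensive.
Import Order.TTheory GRing.Theory Num.Theory.
Local Open Scope ring_scope.
Local Open Scope classical_set_scope.

Section ANPMDefs.
Variable R : realType.

Definition vnorm n (v : 'cV[R]_n) : R := Num.sqrt (\sum_i (v i ord0) ^+ 2).

Definition unit_images m n (M : 'M[R]_(m, n)) : set R :=
  [set r | exists v : 'cV[R]_n, vnorm v = 1 /\ r = vnorm (M *m v)].

Definition spec_norm m n (M : 'M[R]_(m, n)) : R := sup (unit_images M).

Definition sigma_min n (M : 'M[R]_n) : R := inf (unit_images M).

Definition stiefel d k (X : 'M[R]_(d, k)) : Prop := X^T *m X = 1%:M.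

Definition theta d k (U X : 'M[R]_(d, k)) : R := acos (sigma_min (U^T *m X)).

(* (X,Rm) = QR(Y): Y = X Rm, X in St, Rm upper triangular, nonneg diagonal;
   Rm invertible (Y of full column rank), which makes the pair unique. *)
Definition is_QR d k (Y X : 'M[R]_(d, k)) (Rm : 'M[R]_k) : Prop :=
  [/\ Y = X *m Rm, stiefel X,
      (forall i j : 'I_k, (j < i)%N -> Rm i j = 0),
      (forall i : 'I_k, 0 <= Rm i i) & Rm \in unitmx].

Definition ANPM d k (A : 'M[R]_d) (beta : R) (Xi : nat -> 'M[R]_(d, k))
    (X : nat -> 'M[R]_(d, k)) (Rs : nat -> 'M[R]_k) : Prop :=
  [/\ stiefel (X 0%N),
      is_QR ((2^-1) *: (A *m X 0%N) + Xi 0%N) (X 1%N) (Rs 1%N) &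
      forall t : nat, (1 <= t)%N ->
        is_QR (A *m X t - beta *: (X t.-1 *m invmx (Rs t)) + Xi t)
              (X t.+1) (Rs t.+1)].

Definition Ufirst d k : 'M[R]_(d, k) := \matrix_(i, j) ((i : nat) == j)%:R.
Definition Ulast d k : 'M[R]_(d, d - k) := \matrix_(i, j) ((i : nat) == k + j)%N%:R.

Definition Adiag d k (lam beta : R) : 'M[R]_d :=
  \matrix_(i, j) (if (i : nat) == j then (if (i < k)%N then lam else 2 * Num.sqrt beta)
                  else 0).

End ANPMDefs.

(* Main.v *)
Require Import Defs.
From HB Require Import structures.
From mathcomp Require Import all_boot all_order all_algebra.
From mathcomp Require Import classical_sets reals trigo.
From mathcomp Require Import ring lra.
Import Order.TTheory GRing.Theory Num.Theory.
Local Open Scope ring_scope.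


Lemma vnorm1_sum (R : realType) n (v : 'cV[R]_n) : vnorm v = 1 -> \sum_i (v i ord0) ^+ 2 = 1.
Proof.
rewrite /vnorm => h.
have h0 : 0 <= \sum_i (v i ord0) ^+ 2 by apply: sumr_ge0 => i _; exact: sqr_ge0.
by rewrite -(sqr_sqrtr h0) h expr1n.
Qed.

Lemma vnorm_diag (R : realType) n (e : 'rV[R]_n) (v : 'cV[R]_n) :
  vnorm (diag_mx e *m v) = Num.sqrt (\sum_i (e 0 i) ^+ 2 * (v i ord0) ^+ 2).
Proof.
rewrite /vnorm mul_diag_mx; congr Num.sqrt; apply: eq_bigr => i _.
by rewrite mxE exprMn.
Qed.

Lemma vnorm_diag_lb (R : realType) n (e : 'rV[R]_n) (v : 'cV[R]_n) (b : R) :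
  0 <= b -> (forall i, b ^+ 2 <= (e 0 i) ^+ 2) -> vnorm v = 1 ->
  b <= vnorm (diag_mx e *m v).
Proof.
move=> b0 hb /vnorm1_sum hv; rewrite vnorm_diag.
rewrite -(ger0_norm b0) -sqrtr_sqr; apply: ler_wsqrtr.
rewrite -[b ^+ 2]mulr1 -hv mulr_sumr; apply: ler_sum => i _.
by apply: ler_wpM2r => //; exact: sqr_ge0.
Qed.

Lemma vnorm_diag_ub (R : realType) n (e : 'rV[R]_n) (v : 'cV[R]_n) (b : R) :
  0 <= b -> (forall i, (e 0 i) ^+ 2 <= b ^+ 2) -> vnorm v = 1 ->
  vnorm (diag_mx e *m v) <= b.
Proof.
move=> b0 hb /vnorm1_sum hv; rewrite vnorm_diag.
rewrite -(ger0_norm b0) -sqrtr_sqr; apply: ler_wsqrtr.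
rewrite -[b ^+ 2]mulr1 -hv mulr_sumr; apply: ler_sum => i _.
by apply: ler_wpM2r => //; exact: sqr_ge0.
Qed.

Section T2sec.
Local Open Scope classical_set_scope.

Definition ecol (R : realType) {n} (i0 : 'I_n) : 'cV[R]_n := \col_i ((i == i0)%:R).

Lemma vnorm_ecol (R : realType) n (i0 : 'I_n) : vnorm (ecol R i0) = 1.
Proof.
rewrite /vnorm (bigD1 i0) //= big1 => [|i /negbTE hi]; last by rewrite mxE hi expr0n.
by rewrite mxE eqxx expr1n addr0 sqrtr1.
Qed.

Lemma vnorm_diag_ecol (R : realType) n (e : 'rV[R]_n) (i0 : 'I_n) :
  vnorm (diag_mx e *m ecol R i0) = `|e 0 i0|.
Proof.
rewrite vnorm_diag (bigD1 i0) //= big1 => [|i /negbTE hi]; last by rewrite mxE hi expr0n mulr0.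
by rewrite mxE eqxx expr1n mulr1 addr0 sqrtr_sqr.
Qed.

Lemma sigma_min_diag (R : realType) n (e : 'rV[R]_n) (b : R) (i0 : 'I_n) :
  0 <= b -> (forall i, b ^+ 2 <= (e 0 i) ^+ 2) -> e 0 i0 = b ->
  sigma_min (diag_mx e) = b.
Proof.
move=> b0 hb he; rewrite /sigma_min.
have inS : unit_images (diag_mx e) b.
  by exists (ecol R i0); rewrite vnorm_ecol vnorm_diag_ecol he ger0_norm.
have lb : lbound (unit_images (diag_mx e)) b.
  by move=> r [v [hv ->]]; apply: vnorm_diag_lb.
apply/eqP; rewrite eq_le; apply/andP; split.
  by apply: (ge_inf _ inS); exists b.
by apply: lb_le_inf => //; exists b.
Qed.

Lemma spec_norm_diag_le (R : realType) n (e : 'rV[R]_n.+1) (b : R) :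
  0 <= b -> (forall i, (e 0 i) ^+ 2 <= b ^+ 2) -> spec_norm (diag_mx e) <= b.
Proof.
move=> b0 hb; rewrite /spec_norm; apply: ge_sup.
  by exists (vnorm (diag_mx e *m ecol R ord0)), (ecol R ord0); rewrite vnorm_ecol.
by move=> r [v [hv ->]]; apply: vnorm_diag_ub.
Qed.

End T2sec.


Lemma UfirstT_mul (R : realType) d k (M : 'M[R]_(d, k)) (hk : (k <= d)%N) i j :
  ((Ufirst R d k)^T *m M) i j = M (widen_ord hk i) j.
Proof.
rewrite !mxE (bigD1 (widen_ord hk i)) //= big1 => [|l hl].
  by rewrite !mxE eqxx mul1r addr0.
rewrite !mxE; case: eqP => [h|]; last by rewrite mul0r.
by exfalso; move: hl; apply/negP; rewrite negbK; apply/eqP/val_inj.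
Qed.

Lemma Adiag_diag (R : realType) d k lam beta :
  Adiag d k lam beta = diag_mx (\row_(i < d) if (i < k)%N then lam else 2 * Num.sqrt beta :> R).
Proof.
apply/matrixP => i j; rewrite !mxE.
case: (eqVneq i j) => [->|hij]; first by rewrite eqxx mulr1n.
have -> : (i == j :> nat) = false by apply/negbTE.
by rewrite mulr0n.
Qed.


Definition cc (R : realType) : R := 3%:R / 5%:R.
Definition ss (R : realType) : R := 4%:R / 5%:R.

Definition X0 (R : realType) d k' : 'M[R]_(d, k'.+1) :=
  \matrix_(l, j) if j == ord_max then
     (if (l : nat) == k' then cc R else if (l : nat) == k'.+1 then ss R else 0)
   else ((l : nat) == j)%:R.

Lemma X0_stiefel (R : realType) d k' : (k'.+1 < d)%N -> stiefel (X0 R d k').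
Proof.
move=> hd; have hd' : (k' < d)%N by apply: ltnW.
apply/matrixP => i j; rewrite !mxE.
pose p : 'I_d := Ordinal hd'. pose q : 'I_d := Ordinal hd.
case: (eqVneq i ord_max) => [->|hi]; case: (eqVneq j ord_max) => [->|hj].
- rewrite (bigD1 p) // (bigD1 q) /=; last by rewrite -val_eqE /= (gtn_eqF (ltnSn k')).
  rewrite big1 => [|l /andP [hp hq]].
    rewrite !mxE /= eqxx !eqxx /= (gtn_eqF (ltnSn k')).
    rewrite /cc /ss addr0; lra.
  rewrite !mxE eqxx.
  have -> : ((l : nat) == k') = false by apply: contraNF hp => /eqP h; apply/eqP/val_inj.
  have -> : ((l : nat) == k'.+1) = false by apply: contraNF hq => /eqP h; apply/eqP/val_inj.
  by rewrite mulr0.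
- rewrite big1 => [|l _]; last first.
    rewrite !mxE eqxx (negbTE hj).
    case: (eqVneq (l : nat) j) => [hl|hl]; last by rewrite mulr0.
    have hjk : (j < k')%N.
      by rewrite ltn_neqAle -ltnS ltn_ord andbT; apply: contra hj => /eqP h; apply/eqP/val_inj.
    rewrite hl (ltn_eqF hjk) (_ : (j : nat) == k'.+1 = false) ?mul0r //.
    by apply/negbTE; rewrite neq_ltn (ltn_trans hjk).
  by [].
- rewrite big1 => [|l _]; last first.
    rewrite !mxE eqxx (negbTE hi).
    case: (eqVneq (l : nat) i) => [hl|hl]; last by rewrite mul0r.
    have hik : (i < k')%N.
      by rewrite ltn_neqAle -ltnS ltn_ord andbT; apply: contra hi => /eqP h; apply/eqP/val_inj.
    rewrite hl (ltn_eqF hik) (_ : (i : nat) == k'.+1 = false) ?mulr0 //.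
    by apply/negbTE; rewrite neq_ltn (ltn_trans hik).
  by rewrite (negbTE hi).
- rewrite (bigD1 (widen_ord (ltnW hd) i)) //= big1 => [|l hl].
    by rewrite !mxE (negbTE hi) (negbTE hj) /= eqxx mul1r addr0.
  rewrite !mxE (negbTE hi) (negbTE hj).
  have -> : ((l : nat) == i) = false.
    by apply: contraNF hl => /eqP h; apply/eqP/val_inj.
  by rewrite mul0r.
Qed.


Fixpoint rseq (R : realType) (lam beta : R) (n : nat) {struct n} : R :=
  match n with 0 => lam / 2 | n'.+1 => lam - beta / rseq R lam beta n' end.
Arguments rseq {R}.

Lemma rseq_ge (R : realType) (lam beta : R) : 0 < beta -> 2 * Num.sqrt beta < lam ->
  forall n, lam / 2 <= rseq lam beta n.
Proof.
move=> b0 hl; have sb0 : 0 < Num.sqrt beta by rewrite sqrtr_gt0.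
have hb : beta = Num.sqrt beta ^+ 2 by rewrite sqr_sqrtr // ltW.
elim => [|n IH] /=; first by [].
have r0 : 0 < rseq lam beta n by apply: lt_le_trans IH; lra.
have : beta / rseq lam beta n <= lam / 2.
  rewrite ler_pdivrMr // {1}hb.
  have h1 : Num.sqrt beta ^+ 2 <= (lam / 2) * (lam / 2) by nra.
  have h2 : (lam / 2) * (lam / 2) <= (lam / 2) * rseq lam beta n by apply: ler_wpM2l => //; lra.
  lra.
lra.
Qed.

Definition rrow {R : realType} k' (lam beta : R) t : 'rV[R]_k'.+1 :=
  \row_j if j == ord_max then Num.sqrt beta else rseq lam beta t.-1.

Lemma rrow_gt0 (R : realType) k' (lam beta : R) t j : 0 < beta -> 2 * Num.sqrt beta < lam ->
  0 < rrow k' lam beta t 0 j.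
Proof.
move=> b0 hl; rewrite mxE; case: eqP => _; first by rewrite sqrtr_gt0.
have := @rseq_ge _ lam beta b0 hl t.-1; have := sqrtr_ge0 beta; lra.
Qed.

Lemma invmx_diag (R : realType) n (e : 'rV[R]_n) : (forall j, e 0 j != 0) ->
  diag_mx e \in unitmx /\ invmx (diag_mx e) = diag_mx (\row_j (e 0 j)^-1).
Proof.
move=> he.
have h1 : diag_mx e *m diag_mx (\row_j (e 0 j)^-1) = 1%:M.
  rewrite mulmx_diag; apply/matrixP => i j; rewrite !mxE.
  by case: eqP => [->|]; rewrite ?mulr0n ?mulr1n ?mulfV.
have [u _] := mulmx1_unit h1; split => //.
by rewrite -[RHS](mulKmx u) h1 mulmx1.
Qed.


Definition xi {R : realType} (lam beta : R) (t : nat) : R :=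
  - (lam - 2 * Num.sqrt beta) * cc R * (if t == 0%N then 2^-1 else 1).

Definition Xim {R : realType} d k' (lam beta : R) t : 'M[R]_(d, k'.+1) :=
  \matrix_(l, j) if ((l : nat) == k') && (j == ord_max) then xi lam beta t else 0.

Lemma Q1 (R : realType) d k' (lam beta : R) : (k'.+1 < d)%N -> 0 < beta ->
  2^-1 *: (Adiag d k'.+1 lam beta *m X0 R d k') + Xim d k' lam beta 0
  = X0 R d k' *m diag_mx (rrow k' lam beta 1).
Proof.
move=> hd b0; rewrite Adiag_diag mul_diag_mx mul_mx_diag.
have sb : Num.sqrt beta * Num.sqrt beta = beta by rewrite -expr2 sqr_sqrtr // ltW.
apply/matrixP => l j; rewrite /X0 /Xim !mxE /xi /=.
have [e|hj] := eqVneq j ord_max; [subst j | ]; rewrite /= ?eqxx ?andbT ?andbF.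
- case: (eqVneq (l : nat) k') => [e|e].
    rewrite e ltnSn /=; lra.
  case: (eqVneq (l : nat) k'.+1) => [e2|e2].
    rewrite e2 ltnn /=; lra.
  rewrite /=; lra.
- case: (eqVneq (l : nat) j) => [e|e].
    rewrite e ltn_ord /=; lra.
  by rewrite /= !mulr0 mul0r addr0.
Qed.

Lemma Q2 (R : realType) d k' (lam beta : R) t : (k'.+1 < d)%N -> 0 < beta ->
  2 * Num.sqrt beta < lam -> (1 <= t)%N ->
  Adiag d k'.+1 lam beta *m X0 R d k' - beta *: (X0 R d k' *m invmx (diag_mx (rrow k' lam beta t)))
   + Xim d k' lam beta t
  = X0 R d k' *m diag_mx (rrow k' lam beta t.+1).
Proof.
move=> hd b0 hl ht.
have [_ ->] := @invmx_diag R _ (rrow k' lam beta t) (fun j => lt0r_neq0 (@rrow_gt0 R k' lam beta t j b0 hl)).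
rewrite Adiag_diag mul_diag_mx !mul_mx_diag.
have sb0 : 0 < Num.sqrt beta by rewrite sqrtr_gt0.
have sb : beta / Num.sqrt beta = Num.sqrt beta.
  by apply: (mulIf (lt0r_neq0 sb0)); rewrite divfK ?lt0r_neq0 // -expr2 sqr_sqrtr // ltW.
have rs : rseq lam beta t = lam - beta / rseq lam beta t.-1 by case: (t) ht.
have hx x : beta * (x / Num.sqrt beta) = x * Num.sqrt beta by rewrite mulrCA sb.
have hr x : beta * (x / rseq lam beta t.-1) = x * (beta / rseq lam beta t.-1) by rewrite mulrCA.
have t0 : (t == 0%N) = false by case: (t) ht.
apply/matrixP => l j; rewrite /X0 /Xim !mxE /xi /= t0.
have [e|hj] := eqVneq j ord_max; [subst j | ]; rewrite /= ?eqxx ?andbT ?andbF.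
- case: (eqVneq (l : nat) k') => [e|e].
    rewrite e ltnSn /= hx; lra.
  case: (eqVneq (l : nat) k'.+1) => [e2|e2].
    rewrite e2 ltnn /= hx; lra.
  rewrite /=; lra.
- case: (eqVneq (l : nat) j) => [e|e].
    by rewrite e ltn_ord /= hr rs !mulr1 !mul1r addr0.
  by rewrite /= !mulr0 !mul0r addr0 mulr0 subr0.
Qed.


Lemma UlXi (R : realType) d k' (lam beta : R) t :
  (Ulast R d k'.+1)^T *m Xim d k' lam beta t = 0.
Proof.
apply/matrixP => i j; rewrite !mxE big1 // => l _; rewrite !mxE.
case: (eqVneq (l : nat) k') => [e|e]; last by rewrite /= mulr0.
by rewrite e (_ : (k' == k'.+1 + i)%N = false) ?mul0r //; apply/negbTE; rewrite neq_ltn ltnS leq_addr.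
Qed.

Lemma UfXi (R : realType) d k' (lam beta : R) t : (k'.+1 < d)%N ->
  (Ufirst R d k'.+1)^T *m Xim d k' lam beta t
  = diag_mx (\row_j if j == ord_max then xi lam beta t else 0).
Proof.
move=> hd; apply/matrixP => i j; rewrite (@UfirstT_mul R d k'.+1 _ (ltnW hd)) !mxE /=.
have [e|hi] := eqVneq i ord_max.
  subst i; rewrite /= eqxx /=.
  have [e|h] := eqVneq j ord_max; first by subst j; rewrite mulr1n.
  by rewrite mulr0n.
have -> : (i == k' :> nat) = false.
  by apply: contraNF hi => /eqP h; apply/eqP/val_inj.
by rewrite mul0rn.
Qed.

Lemma UfX0 (R : realType) d k' : (k'.+1 < d)%N ->
  (Ufirst R d k'.+1)^T *m X0 R d k'
  = diag_mx (\row_j if j == ord_max then cc R else 1).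
Proof.
move=> hd; apply/matrixP => i j; rewrite (@UfirstT_mul R d k'.+1 _ (ltnW hd)) !mxE /=.
have [e|hi] := eqVneq i ord_max.
  subst i; rewrite /=.
  have [e|h] := eqVneq j ord_max; [subst j; rewrite /= | ].
    by rewrite eqxx.
  have -> : (k' == j :> nat) = false.
    by apply: contraNF h => /eqP h; apply/eqP/val_inj.
  by [].
have hik : (i < k')%N.
  by rewrite ltn_neqAle -ltnS ltn_ord andbT; apply: contra hi => /eqP h; apply/eqP/val_inj.
have [e|h] := eqVneq j ord_max; [subst j; rewrite /= | ].
  rewrite (ltn_eqF hik) (_ : (i : nat) == k'.+1 = false) ?(negbTE hi) //.
  by apply/negbTE; rewrite neq_ltn (ltn_trans hik).
by [].
Qed.

Lemma cos_theta_X0 (R : realType) d k' : (k'.+1 < d)%N ->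
  cos (theta (Ufirst R d k'.+1) (X0 R d k')) = cc R.
Proof.
move=> hd; rewrite /theta UfX0 //.
rewrite (@sigma_min_diag R _ _ (cc R) ord_max).
- by rewrite acosK // in_itv /= /cc; apply/andP; split; lra.
- by rewrite /cc; lra.
- move=> i; rewrite mxE; case: eqP => _ //; rewrite expr1n /cc; nra.
- by rewrite mxE eqxx.
Qed.

Lemma tan_theta_X0 (R : realType) d k' : (k'.+1 < d)%N ->
  tan (theta (Ufirst R d k'.+1) (X0 R d k')) = 4%:R / 3%:R.
Proof.
move=> hd; rewrite /tan cos_theta_X0 //.
rewrite /theta UfX0 // (@sigma_min_diag R _ _ (cc R) ord_max).
- rewrite sin_acos; last by rewrite /cc; apply/andP; split; lra.
  have -> : 1 - cc R ^+ 2 = (ss R) ^+ 2 by rewrite /cc /ss; field.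
  rewrite sqrtr_sqr ger0_norm /ss /cc; last lra.
  by field.
- by rewrite /cc; lra.
- move=> i; rewrite mxE; case: eqP => _ //; rewrite expr1n /cc; nra.
- by rewrite mxE eqxx.
Qed.


Lemma QR_diag (R : realType) d k' (Y X : 'M[R]_(d, k'.+1)) (lam beta : R) t :
  0 < beta -> 2 * Num.sqrt beta < lam -> stiefel X ->
  Y = X *m diag_mx (rrow k' lam beta t) -> is_QR Y X (diag_mx (rrow k' lam beta t)).
Proof.
move=> b0 hl hX hY; split => //.
- move=> i j hji; rewrite mxE.
  have -> : (i == j) = false by apply/negbTE; rewrite neq_ltn hji orbT.
  by rewrite mulr0n.
- by move=> i; rewrite mxE eqxx mulr1n ltW // rrow_gt0.
- by case: (@invmx_diag R _ (rrow k' lam beta t) (fun j => lt0r_neq0 (@rrow_gt0 R k' lam beta t j b0 hl))).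
Qed.

Theorem theorem4 (R : realType) (d k : nat) (beta lam eps : R) :
  (1 <= k)%N -> (k < d)%N -> 0 < beta -> 2 * Num.sqrt beta < lam ->
  0 < eps < 1 ->
  exists (X : nat -> 'M[R]_(d, k)) (Rs : nat -> 'M[R]_k) (Xi : nat -> 'M[R]_(d, k)),
    [/\ stiefel (X 0%N),
        0 < cos (theta (Ufirst R d k) (X 0%N)),
        ANPM (Adiag d k lam beta) beta Xi X Rs,
        (forall t : nat,
           (Ulast R d k)^T *m Xi t = 0 /\
           spec_norm ((Ufirst R d k)^T *m Xi t)
             <= (lam - 2 * Num.sqrt beta) * cos (theta (Ufirst R d k) (X t))) &
        (forall t : nat,
           cos (theta (Ufirst R d k) (X t)) = 0 \/
           eps < tan (theta (Ufirst R d k) (X t)))].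
Proof.
case: k => [//|k'] _ hd b0 hl /andP [e0 e1].
exists (fun _ => X0 R d k'), (fun t => diag_mx (rrow k' lam beta t)), (fun t => Xim d k' lam beta t).
have hS := @X0_stiefel R d k' hd.
split => //.
- by rewrite cos_theta_X0 // /cc; lra.
- split => //; first by apply: QR_diag => //; rewrite Q1.
  move=> t ht; apply: QR_diag => //; rewrite Q2 //.
- move=> t; split; first exact: UlXi.
  rewrite UfXi // cos_theta_X0 //; apply: spec_norm_diag_le.
    by apply: mulr_ge0; rewrite /cc; lra.
  move=> i; rewrite mxE; case: eqP => _; last first.
    by rewrite expr0n /=; apply: sqr_ge0.
  rewrite /xi; case: (t == 0%N); rewrite /cc; nra.
- by move=> t; right; rewrite tan_theta_X0 //; lra.
Qed.
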